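(* Let $M\subset\mathbb R^2$ be open with coordinates $x=(x^1,x^2)$, let $\lambda_1,\lambda_2$ be smooth functions on $M$, and let $f(x,y)$ be a smooth function on $\mathcal TM$ positively homogeneous of degree 2 in $y=(y^1,y^2)$. Consider the spray of the system $\ddot x^1=\lambda_1(x)f(x,\dot x)$, $\ddot x^2=\lambda_2(x)f(x,\dot x)$. On any open set $U\subset\mathcal TM$ on which $(\lambda_1,\lambda_2)$ does not vanish and the third partial derivatives $\frac{\partial^3 f}{\partial y^i\partial y^j\partial y^k}$ do not all vanish at any point (i.e. $f$ is non-quadratic there), this spray is not Landsberg metrizable.
   Context: For a spray $S=y^i\frac{\partial}{\partial x^i}+f^i(x,y)\frac{\partial}{\partial y^i}$ (here $f^1=\lambda_1f$, $f^2=\lambda_2f$), put $\Gamma^i_j=-\frac12\frac{\partial f^i}{\partial y^j}$, $\Gamma^i_{jk}=\frac{\partial\Gamma^i_j}{\partial y^k}$. For $E$ smooth on $U$, $g_{ij}=\frac{\partial^2E}{\partial y^i\partial y^j}$. $S$ is Landsberg metrizable on $U$ if there is a smooth $E:U\to\mathbb R$ with $(g_{ij})$ positive definite satisfying (H) $y^i\frac{\partial E}{\partial y^i}-2E=0$, (EL) $y^j\frac{\partial^2E}{\partial x^j\partial y^i}+f^j\frac{\partial^2E}{\partial y^j\partial y^i}-\frac{\partial E}{\partial x^i}=0$ ($i=1,2$), and (Ls) $\frac{\partial g_{jk}}{\partial x^i}-\Gamma^l_i\frac{\partial g_{jk}}{\partial y^l}-\Gamma^l_{ik}g_{lj}-\Gamma^l_{ij}g_{lk}=0$.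 *)

(* Defs.v *)
From Stdlib Require Import Reals List.
From Coquelicot Require Import Coquelicot.
Open Scope R_scope.

Inductive ix := i1 | i2.

(** Points of TM (M open in R^2): ((x^1,x^2),(y^1,y^2)). *)
Definition pt : Type := ((R * R) * (R * R))%type.

Inductive dir := X (i : ix) | Y (i : ix).

Definition c2 (v : R * R) (i : ix) : R :=
  match i with i1 => fst v | i2 => snd v end.
Definition u2 (v : R * R) (i : ix) (t : R) : R * R :=
  match i with i1 => (t, snd v) | i2 => (fst v, t) end.

Definition coord (p : pt) (d : dir) : R :=
  match d with X i => c2 (fst p) i | Y i => c2 (snd p) i end.
Definition upd (p : pt) (d : dir) (t : R) : pt :=
  match d with X i => (u2 (fst p) i t, snd p) | Y i => (fst p, u2 (snd p) i t) end.

Definition xc (i : ix) (p : pt) : R := coord p (X i).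
Definition yc (i : ix) (p : pt) : R := coord p (Y i).

Definition partial (d : dir) (F : pt -> R) (p : pt) : R :=
  Derive (fun t => F (upd p d t)) (coord p d).

Definition pders (l : list dir) (F : pt -> R) : pt -> R :=
  fold_right partial F l.

Definition smooth_on (U : pt -> Prop) (F : pt -> R) : Prop :=
  forall (l : list dir) (p : pt), U p ->
    (forall d, ex_derive (fun t => pders l F (upd p d t)) (coord p d)) /\
    continuous (pders l F) p.

Definition partial2 (i : ix) (g : R * R -> R) (x : R * R) : R :=
  Derive (fun t => g (u2 x i t)) (c2 x i).
Definition pders2 (l : list ix) (g : R * R -> R) : R * R -> R :=
  fold_right partial2 g l.
Definition smooth_on2 (M : R * R -> Prop) (g : R * R -> R) : Prop :=
  forall (l : list ix) (x : R * R), M x ->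
    (forall i, ex_derive (fun t => pders2 l g (u2 x i t)) (c2 x i)) /\
    continuous (pders2 l g) x.

(** Slit tangent bundle  𝒯M = M x (R^2 \ {0}). *)
Definition slitTM (M : R * R -> Prop) (p : pt) : Prop :=
  M (fst p) /\ snd p <> (0, 0).

Definition pos_homog2 (M : R * R -> Prop) (f : pt -> R) : Prop :=
  forall x y t, M x -> y <> (0, 0) -> 0 < t ->
    f (x, (t * fst y, t * snd y)) = t ^ 2 * f (x, y).

Definition sum2 (g : ix -> R) : R := g i1 + g i2.

(** The spray  S = y^i d/dx^i + f^i d/dy^i  with f^i = lambda_i f. *)
Definition lamv (lam1 lam2 : R * R -> R) (i : ix) : R * R -> R :=
  match i with i1 => lam1 | i2 => lam2 end.
Definition fsp (lam1 lam2 : R * R -> R) (f : pt -> R) (i : ix) (p : pt) : R :=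
  lamv lam1 lam2 i (fst p) * f p.

Definition Gam1 lam1 lam2 f (i j : ix) (p : pt) : R :=
  - / 2 * partial (Y j) (fsp lam1 lam2 f i) p.
Definition Gam2 lam1 lam2 f (i j k : ix) (p : pt) : R :=
  partial (Y k) (Gam1 lam1 lam2 f i j) p.

Definition gmet (E : pt -> R) (i j : ix) (p : pt) : R :=
  partial (Y i) (partial (Y j) E) p.

Definition posdef_at (E : pt -> R) (p : pt) : Prop :=
  forall v : ix -> R, (v i1, v i2) <> (0, 0) ->
    0 < sum2 (fun j => sum2 (fun k => gmet E j k p * v j * v k)).

Definition cond_H (E : pt -> R) (p : pt) : Prop :=
  sum2 (fun i => yc i p * partial (Y i) E p) - 2 * E p = 0.

Definition cond_EL lam1 lam2 f (E : pt -> R) (p : pt) : Prop :=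
  forall i : ix,
    sum2 (fun j => yc j p * partial (X j) (partial (Y i) E) p)
    + sum2 (fun j => fsp lam1 lam2 f j p * partial (Y j) (partial (Y i) E) p)
    - partial (X i) E p = 0.

Definition cond_Ls lam1 lam2 f (E : pt -> R) (p : pt) : Prop :=
  forall i j k : ix,
    partial (X i) (fun q => gmet E j k q) p
    - sum2 (fun l => Gam1 lam1 lam2 f l i p * partial (Y l) (fun q => gmet E j k q) p)
    - sum2 (fun l => Gam2 lam1 lam2 f l i k p * gmet E l j p)
    - sum2 (fun l => Gam2 lam1 lam2 f l i j p * gmet E l k p) = 0.

Definition landsberg_metrizable lam1 lam2 f (U : pt -> Prop) : Prop :=
  exists E : pt -> R, smooth_on U E /\
    forall p, U p ->
      posdef_at E p /\ cond_H E p /\ cond_EL lam1 lam2 f E p /\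
      cond_Ls lam1 lam2 f E p.

(* Main.v *)
Require Import Defs.
From Stdlib Require Import Reals Lra List Permutation.
From Coquelicot Require Import Coquelicot.
Import ListNotations.
Open Scope R_scope.

Lemma ball_pt (p q : pt) (e : R) :
  Rabs (fst (fst q) - fst (fst p)) < e -> Rabs (snd (fst q) - snd (fst p)) < e ->
  Rabs (fst (snd q) - fst (snd p)) < e -> Rabs (snd (snd q) - snd (snd p)) < e ->
  ball p e q.
Proof.
  destruct p as [[a b] [c d]], q as [[a' b'] [c' d']]; simpl; intros.
  split; split; assumption.
Qed.

Lemma ball_pt_inv (p q : pt) (e : R) : ball p e q ->
  Rabs (fst (fst q) - fst (fst p)) < e /\ Rabs (snd (fst q) - snd (fst p)) < e /\
  Rabs (fst (snd q) - fst (snd p)) < e /\ Rabs (snd (snd q) - snd (snd p)) < e.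
Proof.
  destruct p as [[a b] [c d]], q as [[a' b'] [c' d']]; simpl; intros [[H1 H2] [H3 H4]].
  repeat split; assumption.
Qed.

Definition dir_eq_dec (d e : dir) : {d = e} + {d <> e}.
Proof. decide equality; decide equality. Defined.

Ltac dd := repeat match goal with
  | d : dir |- _ => destruct d as [[]|[]]
  | i : ix |- _ => destruct i
  | p : pt |- _ => destruct p as [[? ?] [? ?]]
  end.

Lemma coord_upd_same q d t : coord (upd q d t) d = t.
Proof. dd; reflexivity. Qed.
Lemma coord_upd_other q d e t : d <> e -> coord (upd q d t) e = coord q e.
Proof. intros; dd; try reflexivity; congruence. Qed.
Lemma upd_upd_same q d s t : upd (upd q d s) d t = upd q d t.
Proof. dd; reflexivity. Qed.
Lemma upd_comm q d e s t : d <> e -> upd (upd q d s) e t = upd (upd q e t) d s.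
Proof. intros; dd; try reflexivity; congruence. Qed.
Lemma upd_coord q d : upd q d (coord q d) = q.
Proof. dd; reflexivity. Qed.
Lemma fst_updY q i t : fst (upd q (Y i) t) = fst q.
Proof. dd; reflexivity. Qed.

Lemma open_line (U : pt -> Prop) p d : open U -> U p ->
  locally (coord p d) (fun t => U (upd p d t)).
Proof.
  intros HU Hp. destruct (HU p Hp) as [e He].
  exists e. intros t Ht. apply He. apply ball_pt;
  dd; simpl in *; unfold ball in Ht; simpl in Ht; unfold AbsRing_ball in Ht;
  try (rewrite Rminus_diag, Rabs_R0; apply cond_pos); exact Ht.
Qed.

Lemma open_2d (U : pt -> Prop) p a b : open U -> U p ->
  locally_2d (fun u v => U (upd (upd p a u) b v)) (coord p a) (coord p b).
Proof.
  intros HU Hp. destruct (HU p Hp) as [e He].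
  exists e. intros u v Hu Hv. apply He. apply ball_pt;
  dd; simpl in *;
  try (rewrite Rminus_diag, Rabs_R0; apply cond_pos); assumption.
Qed.

Lemma cont_2d (H : pt -> R) p a b : continuous H p ->
  continuity_2d_pt (fun u v => H (upd (upd p a u) b v)) (coord p a) (coord p b).
Proof.
  intros Hc eps.
  assert (L : locally p (fun q => ball (H p) eps (H q))).
  { apply Hc. apply locally_ball. }
  destruct L as [e He].
  exists e. intros u v Hu Hv.
  rewrite upd_coord, upd_coord.
  apply (He (upd (upd p a u) b v)). apply ball_pt;
  dd; simpl in *;
  try (rewrite Rminus_diag, Rabs_R0; apply cond_pos); assumption.
Qed.

Lemma upd_r_a p a b u v z : a <> b -> upd (upd (upd p a u) b v) a z = upd (upd p a z) b v.
Proof. intros; dd; try reflexivity; congruence. Qed.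
Lemma coord_r_a p a b u v : a <> b -> coord (upd (upd p a u) b v) a = u.
Proof. intros; dd; try reflexivity; congruence. Qed.
Lemma coord_r_b p a b u v : coord (upd (upd p a u) b v) b = v.
Proof. intros; dd; try reflexivity; congruence. Qed.

Section Sm.
Variables (U : pt -> Prop) (F : pt -> R).
Hypothesis HU : open U.
Hypothesis HF : smooth_on U F.

Lemma exd l p d : U p -> ex_derive (fun t => pders l F (upd p d t)) (coord p d).
Proof. intros Hp. exact (proj1 (HF l p Hp) d). Qed.

Lemma inner_ab l p a b z v : a <> b ->
  pders (b :: l) F (upd (upd p a z) b v) = Derive (fun t => pders l F (upd (upd p a z) b t)) v.
Proof.
  intros Hab. simpl. unfold partial. rewrite coord_r_b.
  apply Derive_ext. intro t. rewrite upd_upd_same. reflexivity.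
Qed.

Lemma inner_ba l p a b u z : a <> b ->
  pders (a :: l) F (upd (upd p a u) b z) = Derive (fun t => pders l F (upd (upd p a t) b z)) u.
Proof.
  intros Hab. simpl. unfold partial. rewrite coord_r_a by exact Hab.
  apply Derive_ext. intro t. rewrite upd_r_a by exact Hab. reflexivity.
Qed.

Lemma swap l a b p : U p -> pders (a :: b :: l) F p = pders (b :: a :: l) F p.
Proof.
  intros Hp. destruct (dir_eq_dec a b) as [<-|Hab]; [reflexivity|].
  assert (Hba : b <> a) by congruence.
  set (f2 := fun u v => pders l F (upd (upd p a u) b v)).
  assert (E1 : forall u v, pders (a :: b :: l) F (upd (upd p a u) b v)
     = Derive (fun z => Derive (fun t => f2 z t) v) u).
  { intros u v. change (pders (a :: b :: l) F) with (partial a (pders (b :: l) F)).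
    unfold partial at 1. rewrite coord_r_a by exact Hab.
    apply Derive_ext. intro z. rewrite upd_r_a by exact Hab.
    apply inner_ab; exact Hab. }
  assert (E2 : forall u v, pders (b :: a :: l) F (upd (upd p a u) b v)
     = Derive (fun z => Derive (fun t => f2 t z) u) v).
  { intros u v. change (pders (b :: a :: l) F) with (partial b (pders (a :: l) F)).
    unfold partial at 1. rewrite coord_r_b.
    apply Derive_ext. intro z. rewrite upd_upd_same.
    apply inner_ba; exact Hab. }
  rewrite <- (upd_coord p a) at 1 2. rewrite <- (upd_coord (upd p a (coord p a)) b).
  rewrite E1, E2. rewrite upd_coord.
  apply Schwarz.
  - destruct (open_2d U p a b HU Hp) as [e He]. exists e. intros u v Hu Hv.
    pose proof (He u v Hu Hv) as Hr.
    set (r := upd (upd p a u) b v) in *.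
    repeat split.
    + pose proof (exd l r a Hr) as D. unfold r in D. rewrite coord_r_a in D by exact Hab.
      eapply ex_derive_ext; [|exact D]. intro t. simpl. rewrite upd_r_a by exact Hab. reflexivity.
    + pose proof (exd l r b Hr) as D. unfold r in D. rewrite coord_r_b in D.
      eapply ex_derive_ext; [|exact D]. intro t. simpl. rewrite upd_upd_same. reflexivity.
    + pose proof (exd (b :: l) r a Hr) as D. unfold r in D. rewrite coord_r_a in D by exact Hab.
      eapply ex_derive_ext; [|exact D]. intro t. cbv beta. rewrite upd_r_a by exact Hab.
      exact (inner_ab l p a b t v Hab).
    + pose proof (exd (a :: l) r b Hr) as D. unfold r in D. rewrite coord_r_b in D.
      eapply ex_derive_ext; [|exact D]. intro t. cbv beta. rewrite upd_upd_same.
      exact (inner_ba l p a b u t Hab).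
  - eapply continuity_2d_pt_ext; [intros; apply E1|].
    apply cont_2d. exact (proj2 (HF _ p Hp)).
  - eapply continuity_2d_pt_ext; [intros; apply E2|].
    apply cont_2d. exact (proj2 (HF _ p Hp)).
Qed.

Lemma pders_perm l l' : Permutation l l' -> forall q, U q -> pders l F q = pders l' F q.
Proof.
  induction 1; intros q Hq.
  - reflexivity.
  - simpl. unfold partial. apply Derive_ext_loc.
    eapply filter_imp; [|apply (open_line U q x HU Hq)].
    intros t Ht. apply IHPermutation. exact Ht.
  - apply swap. exact Hq.
  - rewrite IHPermutation1, IHPermutation2 by exact Hq. reflexivity.
Qed.

End Sm.

Lemma loc_sign (c : R) : c <> 0 -> locally c (fun s => 0 < c / s /\ s <> 0).
Proof.
  intros Hc.
  assert (He : 0 < Rabs c / 2) by (apply Rabs_pos_lt in Hc; lra).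
  exists (mkposreal _ He). intros s Hs.
  unfold ball in Hs; simpl in Hs; unfold AbsRing_ball, minus, plus, opp in Hs; simpl in Hs.
  apply Rabs_def2 in Hs.
  destruct (Rlt_or_le 0 c) as [Hp|Hn].
  - rewrite Rabs_pos_eq in Hs by lra.
    assert (0 < s) by lra. split; [|lra].
    apply Rdiv_lt_0_compat; lra.
  - rewrite Rabs_left1 in Hs by lra.
    assert (c < 0) by lra.
    assert (s < 0) by lra. split; [|lra].
    unfold Rdiv. replace (c * / s) with ((-c) * / (-s)) by (field; lra).
    apply Rdiv_lt_0_compat; lra.
Qed.

Section Hom.
Variables (M : R * R -> Prop) (F : pt -> R) (n : nat).
Hypothesis Hh : forall x y t, M x -> y <> (0, 0) -> 0 < t ->
  F (x, (t * fst y, t * snd y)) = t ^ (S n) * F (x, y).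
Hypothesis Hd : forall x y b, M x -> y <> (0, 0) ->
  ex_derive (fun s => F (upd (x, y) (Y b) s)) (coord (x, y) (Y b)).

Lemma homog_deriv x y t b : M x -> y <> (0, 0) -> 0 < t ->
  partial (Y b) F (x, (t * fst y, t * snd y)) = t ^ n * partial (Y b) F (x, y).
Proof.
  intros Hx Hy Ht. destruct y as [y1 y2]. simpl fst; simpl snd.
  set (G := fun s => F (upd (x, (y1, y2)) (Y b) s)).
  set (c := coord (x, (y1, y2)) (Y b)).
  assert (Hc : coord (x, (t * y1, t * y2)) (Y b) = t * c) by (unfold c; destruct b; reflexivity).
  assert (L : locally (t * c) (fun s : R => F (upd (x, (t * y1, t * y2)) (Y b) s) = t ^ (S n) * G (s / t))).
  { assert (K : locally (t * c) (fun s : R => (x, u2 (y1, y2) b (s / t)) = upd (x, (y1,y2)) (Y b) (s / t)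
                 /\ u2 (y1, y2) b (s / t) <> (0, 0))).
    { destruct b; simpl in c.
      - destruct (Req_dec y2 0) as [E2|E2].
        + assert (y1 <> 0) by (intro; apply Hy; subst; reflexivity).
          assert (t * c <> 0) by (unfold c; apply Rmult_integral_contrapositive; lra).
          eapply filter_imp; [|apply (loc_sign (t * c)); assumption].
          intros s [_ Hs]. split; [reflexivity|]. simpl. intro E; injection E; intros.
          apply Hs. replace s with ((s / t) * t) by (field; lra). nra.
        + apply filter_forall. intros s. split; [reflexivity|]. simpl. congruence.
      - destruct (Req_dec y1 0) as [E1|E1].
        + assert (y2 <> 0) by (intro; apply Hy; subst; reflexivity).
          assert (t * c <> 0) by (unfold c; apply Rmult_integral_contrapositive; lra).
          eapply filter_imp; [|apply (loc_sign (t * c)); assumption].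
          intros s [_ Hs]. split; [reflexivity|]. simpl. intro E; injection E; intros.
          apply Hs. replace s with ((s / t) * t) by (field; lra). nra.
        + apply filter_forall. intros s. split; [reflexivity|]. simpl. congruence. }
    eapply filter_imp; [|exact K]. intros s [K1 K2]. change R in s.
    unfold G. rewrite <- K1. rewrite <- (Hh x _ t Hx K2 Ht).
    f_equal. destruct b; simpl; repeat f_equal; field; lra. }
  unfold partial at 1. rewrite Hc. rewrite (Derive_ext_loc _ _ _ L).
  rewrite Derive_scal.
  rewrite Derive_comp.
  - replace (t * c / t) with c by (field; lra).
    replace (Derive (fun s => s / t) (t * c)) with (/ t).
    + unfold partial. fold c. unfold G. simpl pow. field. lra.
    + symmetry. apply is_derive_unique. auto_derive; [lra|field; lra].
  - replace (t * c / t) with c by (field; lra). apply Hd; assumption.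
  - auto_derive. lra.
Qed.
End Hom.

Section Eul.
Variables (M : R * R -> Prop) (h : pt -> R).
Hypothesis Hh : forall x y t, M x -> y <> (0, 0) -> 0 < t ->
  h (x, (t * fst y, t * snd y)) = h (x, y).
Hypothesis Hd : forall x y b, M x -> y <> (0, 0) ->
  ex_derive (fun s => h (upd (x, y) (Y b) s)) (coord (x, y) (Y b)).

Lemma euler0 x y1 y2 : M x -> (y1, y2) <> (0, 0) ->
  y1 * partial (Y i1) h (x, (y1, y2)) + y2 * partial (Y i2) h (x, (y1, y2)) = 0.
Proof.
  intros Hx Hy.
  destruct (Req_dec y2 0) as [E2|E2].
  - assert (E1 : y1 <> 0) by (intro; apply Hy; subst; reflexivity).
    set (psi := fun z => h (x, (y1, z))).
    assert (L : locally y1 (fun s : R => h (upd (x, (y1, y2)) (Y i1) s) = psi (y1 * y2 / s))).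
    { eapply filter_imp; [|apply (loc_sign y1 E1)]. intros s [Hp Hs]. change R in s.
      unfold psi. simpl. rewrite <- (Hh x (s, y2) (y1 / s) Hx) by (try assumption; congruence).
      simpl. f_equal. f_equal. f_equal; field; assumption. }
    unfold partial at 1. simpl coord. rewrite (Derive_ext_loc _ _ _ L).
    assert (D1 : is_derive (fun s => y1 * y2 / s) y1 (- y2 / y1)).
    { auto_derive; [assumption|field; assumption]. }
    assert (D2 : is_derive psi (y1 * y2 / y1) (partial (Y i2) h (x, (y1, y2)))).
    { replace (y1 * y2 / y1) with y2 by (field; assumption).
      apply Derive_correct. apply (Hd x (y1, y2) i2 Hx Hy). }
    assert (DD : Derive (fun s : R => psi (y1 * y2 / s)) y1 = (- y2 / y1) * (partial (Y i2) h (x, (y1, y2)))).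
    { apply is_derive_unique. exact (is_derive_comp _ _ _ _ _ D2 D1). }
    rewrite DD.
    field. assumption.
  - set (phi := fun z => h (x, (z, y2))).
    assert (L : locally y2 (fun s : R => h (upd (x, (y1, y2)) (Y i2) s) = phi (y2 * y1 / s))).
    { eapply filter_imp; [|apply (loc_sign y2 E2)]. intros s [Hp Hs]. change R in s.
      unfold phi. simpl. rewrite <- (Hh x (y1, s) (y2 / s) Hx) by (try assumption; congruence).
      simpl. f_equal. f_equal. f_equal; field; assumption. }
    unfold partial at 2. simpl coord. rewrite (Derive_ext_loc _ _ _ L).
    assert (D1 : is_derive (fun s => y2 * y1 / s) y2 (- y1 / y2)).
    { auto_derive; [assumption|field; assumption]. }
    assert (D2 : is_derive phi (y2 * y1 / y2) (partial (Y i1) h (x, (y1, y2)))).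
    { replace (y2 * y1 / y2) with y1 by (field; assumption).
      apply Derive_correct. apply (Hd x (y1, y2) i1 Hx Hy). }
    assert (DD : Derive (fun s : R => phi (y2 * y1 / s)) y2 = (- y1 / y2) * (partial (Y i1) h (x, (y1, y2)))).
    { apply is_derive_unique. exact (is_derive_comp _ _ _ _ _ D2 D1). }
    rewrite DD.
    field. assumption.
Qed.
End Eul.

Section Main.
Variables (lam1 lam2 : R * R -> R) (f : pt -> R).
Notation lam l r := (lamv lam1 lam2 l (fst r)).

Lemma Gam1_eq l i r : Gam1 lam1 lam2 f l i r = - / 2 * (lam l r * pders [Y i] f r).
Proof.
  unfold Gam1. f_equal. unfold partial at 1. unfold fsp.
  rewrite (Derive_ext _ (fun t => lam l r * f (upd r (Y i) t))) by (intro; rewrite fst_updY; reflexivity).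
  rewrite Derive_scal. reflexivity.
Qed.

Lemma Gam2_eq l i k r : Gam2 lam1 lam2 f l i k r = - / 2 * (lam l r * pders [Y k; Y i] f r).
Proof.
  unfold Gam2. unfold partial at 1.
  rewrite (Derive_ext _ (fun t => - / 2 * (lam l r * partial (Y i) f (upd r (Y k) t))))
    by (intro; rewrite Gam1_eq, fst_updY; reflexivity).
  rewrite Derive_scal, Derive_scal. reflexivity.
Qed.

Lemma Ls_form E r i j k : cond_Ls lam1 lam2 f E r ->
  pders [X i; Y j; Y k] E r
  - ((- / 2 * lam i1 r) * pders [Y i] f r * pders [Y i1; Y j; Y k] E r
     + (- / 2 * lam i2 r) * pders [Y i] f r * pders [Y i2; Y j; Y k] E r)
  - ((- / 2 * lam i1 r) * pders [Y k; Y i] f r * pders [Y i1; Y j] E r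
     + (- / 2 * lam i2 r) * pders [Y k; Y i] f r * pders [Y i2; Y j] E r)
  - ((- / 2 * lam i1 r) * pders [Y j; Y i] f r * pders [Y i1; Y k] E r
     + (- / 2 * lam i2 r) * pders [Y j; Y i] f r * pders [Y i2; Y k] E r) = 0.
Proof.
  intro H. specialize (H i j k). unfold sum2 in H.
  rewrite !Gam1_eq, !Gam2_eq in H. rewrite <- H. simpl. unfold gmet. change (fun q : pt => partial (Y j) (partial (Y k) E) q) with (partial (Y j) (partial (Y k) E)). ring.
Qed.

Lemma D_zero (F : R -> R) x l : is_derive F x l -> locally x (fun t => F t = 0) -> l = 0.
Proof.
  intros HD HL. rewrite <- (is_derive_unique _ _ _ HD).
  rewrite (Derive_ext_loc F (fun _ => 0) x HL). apply Derive_const.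
Qed.

Lemma D_Ls (a0 a1 a2 a3 a4 a5 a6 b1 b2 b3 : R -> R) (c1 c2 x : R) :
  ex_derive a0 x -> ex_derive a1 x -> ex_derive a2 x -> ex_derive a3 x ->
  ex_derive a4 x -> ex_derive a5 x -> ex_derive a6 x ->
  ex_derive b1 x -> ex_derive b2 x -> ex_derive b3 x ->
  locally x (fun t => a0 t - (c1 * b1 t * a1 t + c2 * b1 t * a2 t)
     - (c1 * b2 t * a3 t + c2 * b2 t * a4 t) - (c1 * b3 t * a5 t + c2 * b3 t * a6 t) = 0) ->
  Derive a0 x
  - (c1 * (Derive b1 x * a1 x + b1 x * Derive a1 x) + c2 * (Derive b1 x * a2 x + b1 x * Derive a2 x))
  - (c1 * (Derive b2 x * a3 x + b2 x * Derive a3 x) + c2 * (Derive b2 x * a4 x + b2 x * Derive a4 x))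
  - (c1 * (Derive b3 x * a5 x + b3 x * Derive a5 x) + c2 * (Derive b3 x * a6 x + b3 x * Derive a6 x)) = 0.
Proof.
  intros H0 H1 H2 H3 H4 H5 H6 G1 G2 G3 HL.
  eapply D_zero; [|exact HL].
  auto_derive.
  - repeat split; assumption.
  - change (fun x0 : R => a0 x0) with a0; change (fun x0 : R => a1 x0) with a1;
    change (fun x0 : R => a2 x0) with a2; change (fun x0 : R => a3 x0) with a3;
    change (fun x0 : R => a4 x0) with a4; change (fun x0 : R => a5 x0) with a5;
    change (fun x0 : R => a6 x0) with a6; change (fun x0 : R => b1 x0) with b1;
    change (fun x0 : R => b2 x0) with b2; change (fun x0 : R => b3 x0) with b3. ring.
Qed.

Lemma DLs E U (HU : open U) (HE : smooth_on U E) (HfU : smooth_on U f)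
  (HLs : forall r, U r -> cond_Ls lam1 lam2 f E r) q (Hq : U q) i j k m :
  pders [Y m; X i; Y j; Y k] E q
  - ((- / 2 * lam i1 q) * (pders [Y m; Y i] f q * pders [Y i1; Y j; Y k] E q + pders [Y i] f q * pders [Y m; Y i1; Y j; Y k] E q)
     + (- / 2 * lam i2 q) * (pders [Y m; Y i] f q * pders [Y i2; Y j; Y k] E q + pders [Y i] f q * pders [Y m; Y i2; Y j; Y k] E q))
  - ((- / 2 * lam i1 q) * (pders [Y m; Y k; Y i] f q * pders [Y i1; Y j] E q + pders [Y k; Y i] f q * pders [Y m; Y i1; Y j] E q)
     + (- / 2 * lam i2 q) * (pders [Y m; Y k; Y i] f q * pders [Y i2; Y j] E q + pders [Y k; Y i] f q * pders [Y m; Y i2; Y j] E q))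
  - ((- / 2 * lam i1 q) * (pders [Y m; Y j; Y i] f q * pders [Y i1; Y k] E q + pders [Y j; Y i] f q * pders [Y m; Y i1; Y k] E q)
     + (- / 2 * lam i2 q) * (pders [Y m; Y j; Y i] f q * pders [Y i2; Y k] E q + pders [Y j; Y i] f q * pders [Y m; Y i2; Y k] E q)) = 0.
Proof.
  pose (ln := fun (F : pt -> R) l t => pders l F (upd q (Y m) t)).
  pose proof (D_Ls (ln E [X i; Y j; Y k]) (ln E [Y i1; Y j; Y k]) (ln E [Y i2; Y j; Y k])
    (ln E [Y i1; Y j]) (ln E [Y i2; Y j]) (ln E [Y i1; Y k]) (ln E [Y i2; Y k])
    (ln f [Y i]) (ln f [Y k; Y i]) (ln f [Y j; Y i]) (- / 2 * lam i1 q) (- / 2 * lam i2 q)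
    (coord q (Y m))) as R.
  unfold ln in R.
  specialize (R (exd U E HE _ q (Y m) Hq) (exd U E HE _ q (Y m) Hq) (exd U E HE _ q (Y m) Hq)
     (exd U E HE _ q (Y m) Hq) (exd U E HE _ q (Y m) Hq) (exd U E HE _ q (Y m) Hq)
     (exd U E HE _ q (Y m) Hq) (exd U f HfU _ q (Y m) Hq) (exd U f HfU _ q (Y m) Hq)
     (exd U f HfU _ q (Y m) Hq)).
  cbv beta in R. rewrite !upd_coord in R. apply R.
  eapply filter_imp; [|apply (open_line U q (Y m) HU Hq)].
  intros t Ht. pose proof (Ls_form E _ i j k (HLs _ Ht)) as L.
  rewrite !fst_updY in L. exact L.
Qed.
End Main.

Definition rank (d : dir) : nat :=
  match d with X i1 => 0 | X i2 => 1 | Y i1 => 2 | Y i2 => 3 end.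
Fixpoint ins (a : dir) (l : list dir) : list dir :=
  match l with
  | [] => [a]
  | b :: l' => if Nat.leb (rank a) (rank b) then a :: b :: l' else b :: ins a l'
  end.
Fixpoint sortd (l : list dir) : list dir :=
  match l with [] => [] | a :: l' => ins a (sortd l') end.

Lemma ins_perm a l : Permutation (a :: l) (ins a l).
Proof.
  induction l as [|b l IH]; simpl; [constructor; constructor|].
  destruct (Nat.leb (rank a) (rank b)); [apply Permutation_refl|].
  eapply perm_trans; [apply perm_swap|]. apply perm_skip. exact IH.
Qed.

Lemma sortd_perm l : Permutation l (sortd l).
Proof.
  induction l as [|a l IH]; simpl; [constructor|].
  eapply perm_trans; [apply perm_skip; exact IH|]. apply ins_perm.
Qed.

Definition pdersN := pders.

Lemma normU U F (HU : open U) (HF : smooth_on U F) l q (Hq : U q) :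
  pders l F q = pdersN (sortd l) F q.
Proof. apply (pders_perm U F HU HF). apply sortd_perm. exact Hq. Qed.

Section S.
Variables (lam1 lam2 : R * R -> R) (f : pt -> R).
Notation lam l r := (lamv lam1 lam2 l (fst r)).

Lemma star E U (HU : open U) (HE : smooth_on U E) (HfU : smooth_on U f)
  (HLs : forall r, U r -> cond_Ls lam1 lam2 f E r) q (Hq : U q) i j :
  pders [Y i2; Y j; Y i] f q * (lam i1 q * pders [Y i1; Y i1] E q + lam i2 q * pders [Y i2; Y i1] E q)
  = pders [Y i1; Y j; Y i] f q * (lam i1 q * pders [Y i1; Y i2] E q + lam i2 q * pders [Y i2; Y i2] E q).
Proof.
  pose proof (DLs lam1 lam2 f E U HU HE HfU HLs q Hq i j i1 i2) as R1.
  pose proof (DLs lam1 lam2 f E U HU HE HfU HLs q Hq i j i2 i1) as R2.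
  repeat match goal with
  | H : context [pders ?l E q] |- _ => rewrite (normU U E HU HE l q Hq) in H
  | H : context [pders ?l f q] |- _ => rewrite (normU U f HU HfU l q Hq) in H
  | |- context [pders ?l E q] => rewrite (normU U E HU HE l q Hq)
  | |- context [pders ?l f q] => rewrite (normU U f HU HfU l q Hq)
  end.
  destruct i, j; cbn [sortd ins rank Nat.leb] in *; lra.
Qed.
End S.

Lemma DL l F q d : Derive (fun t => pders l F (upd q d t)) (coord q d) = pders (d :: l) F q.
Proof. reflexivity. Qed.
Lemma DL0 F q d : Derive (fun t => F (upd q d t)) (coord q d) = pders [d] F q.
Proof. reflexivity. Qed.

Ltac etafix := repeat match goal with |- context [fun x0 : R => ?g x0] => change (fun x0 : R => g x0) with g end.

Lemma D_H1 (a0 a1 a2 : R -> R) c x : ex_derive a0 x -> ex_derive a1 x -> ex_derive a2 x ->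
  locally x (fun t => t * a1 t + c * a2 t - 2 * a0 t = 0) ->
  a1 x + x * Derive a1 x + c * Derive a2 x - 2 * Derive a0 x = 0.
Proof.
  intros H0 H1 H2 HL. eapply D_zero; [|exact HL]. auto_derive.
  - repeat split; assumption.
  - etafix. ring.
Qed.

Lemma D_H2 (a0 a1 a2 : R -> R) c x : ex_derive a0 x -> ex_derive a1 x -> ex_derive a2 x ->
  locally x (fun t => c * a1 t + t * a2 t - 2 * a0 t = 0) ->
  c * Derive a1 x + a2 x + x * Derive a2 x - 2 * Derive a0 x = 0.
Proof.
  intros H0 H1 H2 HL. eapply D_zero; [|exact HL]. auto_derive.
  - repeat split; assumption.
  - etafix. ring.
Qed.

Lemma D_L2 (a1 a2 : R -> R) c1 c2 x : ex_derive a1 x -> ex_derive a2 x ->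
  locally x (fun t => c1 * a1 t + c2 * a2 t = 0) ->
  c1 * Derive a1 x + c2 * Derive a2 x = 0.
Proof.
  intros H1 H2 HL. eapply D_zero; [|exact HL]. auto_derive.
  - repeat split; assumption.
  - etafix. ring.
Qed.

Lemma H1 E U (HU : open U) (HE : smooth_on U E) (HH : forall r, U r -> cond_H E r) q (Hq : U q) l :
  yc i1 q * pders [Y l; Y i1] E q + yc i2 q * pders [Y l; Y i2] E q = pders [Y l] E q.
Proof.
  pose (ln := fun (F : pt -> R) l' d t => pders l' F (upd q d t)).
  destruct l.
  - pose proof (D_H1 (ln E [] (Y i1)) (ln E [Y i1] (Y i1)) (ln E [Y i2] (Y i1)) (yc i2 q) (coord q (Y i1))
      (exd U E HE _ q _ Hq) (exd U E HE _ q _ Hq) (exd U E HE _ q _ Hq)) as Z.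
    unfold ln in Z. cbv beta in Z. rewrite !upd_coord in Z.
    assert (Z' : pders [Y i1] E q + yc i1 q * pders [Y i1; Y i1] E q + yc i2 q * pders [Y i1; Y i2] E q
               - 2 * pders [Y i1] E q = 0).
    { apply Z. eapply filter_imp; [|apply (open_line U q (Y i1) HU Hq)].
      intros t Ht. pose proof (HH _ Ht) as K. unfold cond_H, sum2, yc in K.
      rewrite coord_upd_same, coord_upd_other in K by discriminate. exact K. }
    lra.
  - pose proof (D_H2 (ln E [] (Y i2)) (ln E [Y i1] (Y i2)) (ln E [Y i2] (Y i2)) (yc i1 q) (coord q (Y i2))
      (exd U E HE _ q _ Hq) (exd U E HE _ q _ Hq) (exd U E HE _ q _ Hq)) as Z.
    unfold ln in Z. cbv beta in Z. rewrite !upd_coord in Z.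
    assert (Z' : yc i1 q * pders [Y i2; Y i1] E q + pders [Y i2] E q + yc i2 q * pders [Y i2; Y i2] E q
               - 2 * pders [Y i2] E q = 0).
    { apply Z. eapply filter_imp; [|apply (open_line U q (Y i2) HU Hq)].
      intros t Ht. pose proof (HH _ Ht) as K. unfold cond_H, sum2, yc in K.
      rewrite coord_upd_same, coord_upd_other in K by discriminate. exact K. }
    lra.
Qed.

Lemma Dlin E U (HU : open U) (HE : smooth_on U E) c1 c2 q (Hq : U q) m :
  (forall r, U r -> fst r = fst q -> c1 * pders [Y i1] E r + c2 * pders [Y i2] E r = 0) ->
  c1 * pders [Y m; Y i1] E q + c2 * pders [Y m; Y i2] E q = 0.
Proof.
  intros HZ.
  pose (ln := fun (F : pt -> R) l' t => pders l' F (upd q (Y m) t)).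
  pose proof (D_L2 (ln E [Y i1]) (ln E [Y i2]) c1 c2 (coord q (Y m))
      (exd U E HE _ q _ Hq) (exd U E HE _ q _ Hq)) as Z.
  unfold ln in Z. apply Z.
  eapply filter_imp; [|apply (open_line U q (Y m) HU Hq)].
  intros t Ht. apply HZ; [exact Ht|apply fst_updY].
Qed.

Theorem mainTheorem13
  (M : R * R -> Prop) (lam1 lam2 : R * R -> R) (f : pt -> R) (U : pt -> Prop)
  (HM : open M)
  (Hlam1 : smooth_on2 M lam1) (Hlam2 : smooth_on2 M lam2)
  (Hf : smooth_on (slitTM M) f)
  (Hhom : pos_homog2 M f)
  (HU : open U) (HUsub : forall p, U p -> slitTM M p)
  (HUne : exists p, U p)
  (Hlam : forall p, U p -> (lam1 (fst p), lam2 (fst p)) <> (0, 0))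
  (Hnq : forall p, U p -> exists i j k : ix,
      partial (Y i) (partial (Y j) (partial (Y k) f)) p <> 0) :
  ~ landsberg_metrizable lam1 lam2 f U.
Proof.
  intros [E [HE HP]].
  destruct HUne as [p0 Hp0].
  assert (HfU : smooth_on U f) by (intros l p Hp; apply Hf; apply HUsub; exact Hp).
  assert (HLs : forall r, U r -> cond_Ls lam1 lam2 f E r) by (intros r Hr; apply (HP r Hr)).
  assert (HH : forall r, U r -> cond_H E r) by (intros r Hr; apply (HP r Hr)).
  assert (Hd1 : forall x y b, M x -> y <> (0, 0) ->
     ex_derive (fun s => f (upd (x, y) (Y b) s)) (coord (x, y) (Y b))).
  { intros x y b Hx Hy. exact (exd _ f Hf [] (x, y) (Y b) (conj Hx Hy)). }
  pose proof (homog_deriv M f 1 Hhom Hd1) as Hh1.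
  assert (Heul : forall q, U q -> forall i j,
    yc i1 q * pders [Y i1; Y j; Y i] f q + yc i2 q * pders [Y i2; Y j; Y i] f q = 0).
  { intros q Hq i j. destruct q as [x [y1 y2]]. destruct (HUsub _ Hq) as [Hx Hy]. simpl in Hx, Hy.
    assert (Hd2 : forall x y b, M x -> y <> (0, 0) ->
      ex_derive (fun s => partial (Y i) f (upd (x, y) (Y b) s)) (coord (x, y) (Y b))).
    { intros x' y' b Hx' Hy'. exact (exd _ f Hf [Y i] (x', y') (Y b) (conj Hx' Hy')). }
    apply (euler0 M (pders [Y j; Y i] f)); try assumption.
    - intros x' y' t Hx' Hy' Ht.
      change (pders [Y j; Y i] f) with (partial (Y j) (partial (Y i) f)).
      rewrite (homog_deriv M (partial (Y i) f) 0
                 (fun x y t Hx Hy Ht => Hh1 x y t i Hx Hy Ht) Hd2 x' y' t j Hx' Hy' Ht).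
      simpl. ring.
    - intros x' y' b Hx' Hy'. exact (exd _ f Hf [Y j; Y i] (x', y') (Y b) (conj Hx' Hy')). }
  assert (HwY : forall q, U q -> lam1 (fst q) * pders [Y i1] E q + lam2 (fst q) * pders [Y i2] E q = 0).
  { intros q Hq. destruct (Hnq q Hq) as [a [b [c Hne]]].
    pose proof (star lam1 lam2 f E U HU HE HfU HLs q Hq c b) as S.
    pose proof (Heul q Hq c b) as Eu.
    pose proof (H1 E U HU HE HH q Hq i1) as K1.
    pose proof (H1 E U HU HE HH q Hq i2) as K2.
    simpl lamv in S.
    rewrite <- K1, <- K2.
    set (A1 := pders [Y i1; Y b; Y c] f q) in *.
    set (A2 := pders [Y i2; Y b; Y c] f q) in *.
    set (w1 := lam1 (fst q) * pders [Y i1; Y i1] E q + lam2 (fst q) * pders [Y i2; Y i1] E q) in *.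
    set (w2 := lam1 (fst q) * pders [Y i1; Y i2] E q + lam2 (fst q) * pders [Y i2; Y i2] E q) in *.
    set (y1 := yc i1 q) in *. set (y2 := yc i2 q) in *.
    assert (Wy : lam1 (fst q) * (y1 * pders [Y i1; Y i1] E q + y2 * pders [Y i1; Y i2] E q) +
                 lam2 (fst q) * (y1 * pders [Y i2; Y i1] E q + y2 * pders [Y i2; Y i2] E q)
                 = y1 * w1 + y2 * w2) by (unfold w1, w2; ring).
    rewrite Wy.
    assert (Q1 : A1 * (y1 * w1 + y2 * w2) = w1 * (y1 * A1 + y2 * A2) + y2 * (A1 * w2 - A2 * w1)) by ring.
    assert (Q2 : A2 * (y1 * w1 + y2 * w2) = w2 * (y1 * A1 + y2 * A2) + y1 * (A2 * w1 - A1 * w2)) by ring.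
    rewrite Eu, S in Q1, Q2.
    replace (A1 * w2 - A1 * w2) with 0 in Q1 by ring.
    replace (A1 * w2 - A1 * w2) with 0 in Q2 by ring.
    destruct a.
    - change (A1 <> 0) in Hne.
      assert (A1 * (y1 * w1 + y2 * w2) = 0) by lra.
      destruct (Rmult_integral _ _ H); [contradiction|assumption].
    - change (A2 <> 0) in Hne.
      assert (A2 * (y1 * w1 + y2 * w2) = 0) by lra.
      destruct (Rmult_integral _ _ H); [contradiction|assumption]. }
  assert (Hm : forall m, lam1 (fst p0) * pders [Y m; Y i1] E p0 + lam2 (fst p0) * pders [Y m; Y i2] E p0 = 0).
  { intro m. apply (Dlin E U HU HE (lam1 (fst p0)) (lam2 (fst p0)) p0 Hp0 m).
    intros r Hr Hfst. assert (e1 : lam1 (fst p0) = lam1 (fst r)) by (rewrite Hfst; reflexivity).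
    assert (e2 : lam2 (fst p0) = lam2 (fst r)) by (rewrite Hfst; reflexivity).
    rewrite e1, e2. apply HwY. exact Hr. }
  destruct (HP p0 Hp0) as [Hpd _].
  specialize (Hpd (fun l => lamv lam1 lam2 l (fst p0)) (Hlam p0 Hp0)).
  pose proof (Hm i1) as M1. pose proof (Hm i2) as M2.
  change (lam1 (fst p0) * gmet E i1 i1 p0 + lam2 (fst p0) * gmet E i1 i2 p0 = 0) in M1.
  change (lam1 (fst p0) * gmet E i2 i1 p0 + lam2 (fst p0) * gmet E i2 i2 p0 = 0) in M2.
  unfold sum2 in Hpd. simpl lamv in Hpd.
  set (l1 := lam1 (fst p0)) in *. set (l2 := lam2 (fst p0)) in *.
  set (g11 := gmet E i1 i1 p0) in *. set (g12 := gmet E i1 i2 p0) in *.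
  set (g21 := gmet E i2 i1 p0) in *. set (g22 := gmet E i2 i2 p0) in *.
  assert (Z : g11 * l1 * l1 + g12 * l1 * l2 + (g21 * l2 * l1 + g22 * l2 * l2)
              = l1 * (l1 * g11 + l2 * g12) + l2 * (l1 * g21 + l2 * g22)) by ring.
  rewrite Z, M1, M2 in Hpd. lra.
Qed.
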